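(* Let $e\geqslant 1$ be an integer and $b\geqslant 2$ an even integer, and let $D_{e,b}$ be the cycle set for $T_{e,b}$. Assume there exists a positive integer $h$ such that $h+x$ is $(e,b)$-happy for every $x\in D_{e,b}$. Then for every positive integer $m$ there exists a positive integer $l$ such that $l+1,l+2,\ldots,l+m$ are all $(e,b)$-happy.
   Context: For a positive integer $n=\sum_{j=0}^k a_j b^j$ with $0\leqslant a_j<b$, $T_{e,b}(n)=\sum_{j=0}^k a_j^e$; $T_{e,b}^r$ is the $r$-th iterate, $T_{e,b}^0(n)=n$. A positive integer $n$ is $(e,b)$-happy if $T_{e,b}^r(n)=1$ for some $r\geqslant 0$. A set $D_{e,b}$ of positive integers is a cycle set for $T_{e,b}$ if (1) for every positive integer $n$ there is $r\geqslant 0$ with $T_{e,b}^r(n)\in D_{e,b}$; (2) $T_{e,b}(x)\in D_{e,b}$ for all $x\in D_{e,b}$; (3) for every $x\in D_{e,b}$ there is $r\geqslant 1$ with $T_{e,b}^r(x)=x$. Such a set is finite and uniquely determined by $e,b$ (it is the set of positive integers $x$ with $T_{e,b}^r(x)=x$ for some $r\geqslant1$). *)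

(* Defs.v *)
From mathcomp Require Import all_boot.
Set Implicit Arguments. Unset Strict Implicit. Unset Printing Implicit Defensive.

(* Base-b digits of n, least significant first (empty for n = 0).
   Fuel n suffices since each step divides by b >= 2. *)
Fixpoint digits_aux (fuel b n : nat) : seq nat :=
  match fuel with
  | 0 => [::]
  | fuel'.+1 => if n == 0 then [::] else (n %% b) :: digits_aux fuel' b (n %/ b)
  end.

Definition digits (b n : nat) : seq nat := digits_aux n b n.

Definition T (e b n : nat) : nat := \sum_(d <- digits b n) d ^ e.

Definition happy (e b n : nat) : Prop := 0 < n /\ exists r, iter r (T e b) n = 1.

Definition cycle_set (e b : nat) : nat -> Prop :=
  fun x => 0 < x /\ exists r, 0 < r /\ iter r (T e b) x = x.

Definition is_cycle_set (e b : nat) (D : nat -> Prop) : Prop :=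
  [/\ (forall n, 0 < n -> exists r, D (iter r (T e b) n)),
      (forall x, D x -> D (T e b x)) &
      (forall x, D x -> exists r, 0 < r /\ iter r (T e b) x = x)].

(* Main.v *)
Require Import Defs.
From mathcomp Require Import all_boot zify.


Lemma digits_aux_fuel b (hb : 2 <= b) : forall f1 f2 n, n <= f1 -> n <= f2 ->
  digits_aux f1 b n = digits_aux f2 b n.
Proof.
elim=> [|f1 IH] [|f2] n h1 h2 /=.
- by [].
- by have -> : n = 0 by lia.
- by have -> : n = 0 by lia.
- case: eqP => // /eqP n0; congr (_ :: _); apply: IH.
  + have : n %/ b < n by rewrite ltn_Pdiv //; lia.
    lia.
  + have : n %/ b < n by rewrite ltn_Pdiv //; lia.
    lia.
Qed.

Lemma T_rec e b (he : 1 <= e) (hb : 2 <= b) n :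
  T e b n = (n %% b) ^ e + T e b (n %/ b).
Proof.
case: n => [|n].
  by rewrite mod0n div0n exp0n // /T /digits /=.
rewrite /T /digits /= big_cons; congr (_ + _).
rewrite (@digits_aux_fuel b hb n (n.+1 %/ b)) //.
have : n.+1 %/ b < n.+1 by rewrite ltn_Pdiv //; lia.
lia.
Qed.

Lemma T0 e b : T e b 0 = 0.
Proof. by rewrite /T /digits /= big_nil. Qed.

Lemma T_concat e b (he : 1 <= e) (hb : 2 <= b) A : forall K s, s < b ^ K ->
  T e b (A * b ^ K + s) = T e b A + T e b s.
Proof.
elim=> [|K IH] s hs.
  have -> : s = 0 by rewrite expn0 in hs; lia.
  by rewrite expn0 muln1 addn0 T0 addn0.
rewrite T_rec // (@T_rec e b he hb s).
have -> : A * b ^ K.+1 + s = (A * b ^ K) * b + s by rewrite expnS mulnCA mulnC.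
rewrite modnMDl divnMDl; last lia.
rewrite IH; first lia.
rewrite ltn_divLR; last lia. by rewrite mulnC -expnS.
Qed.

Fixpoint rep b a := if a is a'.+1 then rep b a' * b + 1 else 0.

Lemma T_rep e b (he : 1 <= e) (hb : 2 <= b) a : T e b (rep b a) = a.
Proof.
elim: a => [|a IH] /=; first exact: T0.
rewrite T_rec // modnMDl divnMDl; last lia.
rewrite modn_small // divn_small // addn0 IH exp1n; lia.
Qed.

Lemma rep_pos b a : 0 < a -> 0 < rep b a.
Proof. case: a => //= a _; lia. Qed.

Lemma T_pos e b (he : 1 <= e) (hb : 2 <= b) n : 0 < n -> 0 < T e b n.
Proof.
elim/ltn_ind: n => n IH n0.
rewrite T_rec //.
case: (posnP (n %% b)) => hm.
  rewrite hm exp0n // add0n; apply: IH.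
  + by rewrite ltn_Pdiv //; lia.
  + rewrite divn_gt0; last lia.
    have := divn_eq n b; rewrite hm addn0 => hn.
    case: (posnP (n %/ b)) => hq.
      by move: hn; rewrite hq mul0n; lia.
    by rewrite [X in _ <= X]hn leq_pmull.
have : 0 < (n %% b) ^ e by rewrite expn_gt0 hm.
lia.
Qed.
Set Implicit Arguments.
Unset Strict Implicit.

Lemma T_half e b (he : 1 <= e) (hb : 2 <= b) : exists K, forall n, T e b n <= n %/ 2 + K.
Proof.
set c := (b - 1) ^ e.
set N0 := 4 * c + 4.
exists (\max_(i < N0) T e b i).
elim/ltn_ind => n IH.
case: (ltnP n N0) => hn.
  have := @leq_bigmax _ (fun i : 'I_N0 => T e b i) (Ordinal hn) => /= H; lia.
rewrite T_rec //.
have hd : (n %% b) ^ e <= c.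
  rewrite /c leq_exp2r //; have := ltn_pmod n (ltnW hb); lia.
have hq : n %/ b < n by rewrite ltn_Pdiv //; lia.
have := IH _ hq.
have : n %/ b <= n %/ 2 by apply: leq_div2l.
lia.
Qed.

Lemma orbit_bound e b (he : 1 <= e) (hb : 2 <= b) s : exists B, forall r, iter r (T e b) s <= B.
Proof.
have [K HK] := T_half he hb.
exists (maxn s (2 * K)).
elim=> [|r IH] /=; first by rewrite leq_maxl.
have := HK (iter r (T e b) s); lia.
Qed.

Lemma eventually_periodic e b (he : 1 <= e) (hb : 2 <= b) s :
  exists i p, 0 < p /\ iter (i + p) (T e b) s = iter i (T e b) s.
Proof.
have [B HB] := orbit_bound he hb s.
set sq := [seq iter i (T e b) s | i <- iota 0 B.+2].
have : ~~ uniq sq.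
  apply/negP => U.
  have := uniq_leq_size U (s2 := iota 0 B.+1).
  rewrite size_map !size_iota ltnn; move=> H; suff : false by []; apply: H.
  move=> x /mapP [i _ ->]; rewrite mem_iota /=; exact: HB.
move/(uniqPn 0) => [i [j [hij hj]]].
rewrite /sq size_map size_iota in hj.
rewrite !(nth_map 0) ?size_iota; try lia.
rewrite !nth_iota; try lia.
rewrite !add0n => E.
exists i, (j - i); split; first lia.
by rewrite subnKC ?E //; lia.
Qed.

Lemma iter_pos e b (he : 1 <= e) (hb : 2 <= b) s r : 0 < s -> 0 < iter r (T e b) s.
Proof. move=> hs; elim: r => //= r IH; exact: T_pos. Qed.

Lemma eventually_cycle e b (he : 1 <= e) (hb : 2 <= b) s : 0 < s ->
  exists R, forall r, R <= r -> cycle_set e b (iter r (T e b) s).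
Proof.
move=> hs; have [i [p [hp E]]] := eventually_periodic he hb s.
exists i => r hr; split; first exact: iter_pos.
exists p; split => //.
rewrite -iterD.
have -> : p + r = (r - i) + (i + p) by lia.
by rewrite iterD E -iterD subnK.
Qed.

Lemma seq_bound (S : seq nat) : exists M, forall s, s \in S -> s <= M.
Proof.
elim: S => [|x S [M HM]]; first by exists 0.
exists (maxn x M) => s; rewrite inE => /orP [/eqP -> | /HM]; lia.
Qed.

Lemma shift e b (he : 1 <= e) (hb : 2 <= b) r : forall (S : seq nat) c, 0 < c ->
  exists a, 0 < a /\ forall s, s \in S -> iter r (T e b) (a + s) = c + iter r (T e b) s.
Proof.
elim: r => [|r IH] S c hc.
  by exists c.
have [a' [ha' Ha']] := IH [seq T e b s | s <- S] c hc.
have [M HM] := seq_bound S.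
exists (rep b a' * b ^ M); split.
  by rewrite muln_gt0 rep_pos // expn_gt0; lia.
move=> s hs; rewrite !iterSr T_concat //; last first.
  by apply: leq_ltn_trans (HM _ hs) _; apply: ltn_expl.
rewrite T_rep //; apply: Ha'; exact: map_f.
Qed.

Lemma common_cycle e b (he : 1 <= e) (hb : 2 <= b) (S : seq nat) :
  (forall s, s \in S -> 0 < s) ->
  exists R, forall s, s \in S -> cycle_set e b (iter R (T e b) s).
Proof.
suff : (forall s, s \in S -> 0 < s) ->
  exists R, forall s, s \in S -> forall r, R <= r -> cycle_set e b (iter r (T e b) s).
  by move=> H /H [R HR]; exists R => s hs; exact: HR.
elim: S => [|x S IH] hpos; first by exists 0.
have [R HR] : exists R, forall s, s \in S -> forall r, R <= r -> cycle_set e b (iter r (T e b) s).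
  by apply: IH => s hs; apply: hpos; rewrite inE hs orbT.
have [R' HR'] := eventually_cycle he hb (hpos x (mem_head _ _)).
exists (maxn R R') => s; rewrite inE => /orP [/eqP -> | hs] r hr.
  by apply: HR'; lia.
by apply: HR => //; lia.
Qed.

Theorem corollary2p1 (e b : nat) (he : 1 <= e) (hb : 2 <= b) (hbeven : ~~ odd b) :
  (exists h, 0 < h /\ forall x, cycle_set e b x -> happy e b (h + x)) ->
  forall m, 0 < m -> exists l, 0 < l /\ forall i, 1 <= i <= m -> happy e b (l + i).
Proof.
move=> [h [hh Hh]] m hm.
have [R HR] : exists R, forall s, s \in iota 1 m -> cycle_set e b (iter R (T e b) s).
  by apply: common_cycle => // s; rewrite mem_iota; lia.
have [a [ha Ha]] := shift he hb R (iota 1 m) hh.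
exists a; split => // i hi.
have hin : i \in iota 1 m by rewrite mem_iota; lia.
have [_ [r' Hr']] := Hh _ (HR _ hin).
split; first lia.
exists (r' + R); by rewrite iterD Ha.
Qed.
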